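(* Let $G$ be a finite group of order $n$, $k$ a positive integer, $a_1,\dots,a_k,b_1,\dots,b_k$ independent uniformly random elements of $G$, and for $(i,j)\in V=[k]\times[k]$ and $x\in G$ let $I_{(i,j)}(x)$ be the indicator of the event $\{x=a_ib_j \text{ or } x=b_ja_i\}$. Let $\Gamma=(V,E)$ be the graph with $(i,j)\sim(\ell,m)$ iff ($i=\ell$ and $j\ne m$) or ($i\ne \ell$ and $j=m$). Let $x,y\in G$, $v\in V$ and $u\in V$ with $u\sim v$. Then $$\mathbb{E}[I_v(x)I_u(y)]=\frac{4}{n^2}\Big(1-\frac{|C(x)|+|C(y)|}{2n}+\frac{|C(x)\cap C(y)|}{4n}\Big).$$
   Context: $[k]=\{1,\dots,k\}$; $C(x)=\{g\in G: gx=xg\}$ is the centralizer of $x$. *)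

(* Defs.v *)
From mathcomp Require Import all_boot all_order all_algebra all_fingroup.
Set Implicit Arguments. Unset Strict Implicit. Unset Printing Implicit Defensive.
Import GRing.Theory Num.Theory.

Definition Vtx (k : nat) : finType := ('I_k * 'I_k)%type.

Definition adjG (k : nat) (v u : Vtx k) : bool :=
  ((v.1 == u.1) && (v.2 != u.2)) || ((v.1 != u.1) && (v.2 == u.2)).

Definition Omega (gT : finGroupType) (k : nat) : finType :=
  ({ffun 'I_k -> gT} * {ffun 'I_k -> gT})%type.

Definition Ind (gT : finGroupType) (k : nat) (v : Vtx k) (x : gT)
    (w : Omega gT k) : rat :=
  ((x == (w.1 v.1 * w.2 v.2)%g) || (x == (w.2 v.2 * w.1 v.1)%g))%:R.

(* Expectation under the uniform (product of independent uniforms) measure. *)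
Definition Expect (gT : finGroupType) (k : nat) (f : Omega gT k -> rat) : rat :=
  (\sum_(w : Omega gT k) f w) / #|Omega gT k|%:R.

(* Main.v *)
Require Import Defs.
From mathcomp Require Import all_boot all_order all_algebra all_fingroup.
From mathcomp Require Import ring.
Import GRing.Theory Num.Theory.
Local Open Scope ring_scope.

Lemma foldr_prod (T : Type) (f : T -> nat) (s : seq T) :
  foldr muln 1%N (map f s) = (\prod_(x <- s) f x)%N.
Proof. by elim: s => [|x s IH]; rewrite ?big_nil ?big_cons //= IH. Qed.

Lemma card_fix2 (I T : finType) (j m : I) (hjm : j != m) (a b : T) :
  #|[pred f : {ffun I -> T} | (f j == a) && (f m == b)]| = (#|T| ^ (#|I| - 2))%N.
Proof.
pose F := fun i : I => if i == j then pred1 a else if i == m then pred1 b else predT.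
have -> : #|[pred f : {ffun I -> T} | (f j == a) && (f m == b)]| = #|family F|.
  apply: eq_card => f; rewrite !inE; apply/andP/familyP => [[/eqP fj /eqP fm] i|H].
    rewrite /F; case: ifP => [/eqP ->|_]; first by rewrite inE fj.
    by case: ifP => [/eqP ->|_]; first by rewrite inE fm.
  have Hj := H j; have Hm := H m.
  rewrite /F eqxx in Hj; rewrite /F eq_sym (negbTE hjm) eqxx in Hm.
  by rewrite !inE in Hj Hm; rewrite Hj Hm.
rewrite card_family /image_mem foldr_prod big_enum /=.
rewrite (bigD1 j) //= (bigD1 m) 1?eq_sym //= /F. rewrite eqxx eq_sym (negbTE hjm) eqxx.
rewrite !card1 !mul1n.
rewrite (eq_bigr (fun _ => #|T|)); last first.
  by move=> i /andP [/negbTE -> /negbTE ->]; by apply: eq_card.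
rewrite prod_nat_const; congr (_ ^ _)%N.
have h1 := cardD1 j (predT : pred I).
have h2 := cardD1 m [predD1 (predT : pred I) & j].
rewrite !inE eq_sym hjm /= in h1 h2.
rewrite cardT -cardE h1 h2 add1n add1n !subSS subn0.
apply: eq_card => i; rewrite !inE andbT andbC; done.
Qed.

Lemma card_fix1 (I T : finType) (j : I) (a : T) :
  #|[pred f : {ffun I -> T} | f j == a]| = (#|T| ^ (#|I| - 1))%N.
Proof.
pose F := fun i : I => if i == j then pred1 a else predT.
have -> : #|[pred f : {ffun I -> T} | f j == a]| = #|family F|.
  apply: eq_card => f; rewrite !inE; apply/idP/familyP => [/eqP fj i|H].
    by rewrite /F; case: ifP => [/eqP ->|_]; first by rewrite inE fj.
  have Hj := H j.
  by rewrite /F eqxx !inE in Hj.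
rewrite card_family /image_mem foldr_prod big_enum /=.
rewrite (bigD1 j) //= /F eqxx card1 mul1n.
rewrite (eq_bigr (fun _ => #|T|)); last first.
  by move=> i /negbTE ->; apply: eq_card.
rewrite prod_nat_const; congr (_ ^ _)%N.
have h1 := cardD1 j (predT : pred I).
rewrite !inE /= in h1.
rewrite cardT -cardE h1 add1n subn1 /=.
by apply: eq_card => i; rewrite !inE andbT.
Qed.

Lemma sum_ffun1 (I T : finType) (j : I) (g : T -> rat) :
  \sum_(f : {ffun I -> T}) g (f j) = (#|T| ^ (#|I| - 1))%:R * \sum_a g a.
Proof.
rewrite (partition_big (fun f : {ffun I -> T} => f j) predT) //= big_distrr /=.
apply: eq_bigr => a _.
rewrite (eq_bigr (fun _ => g a)); last by move=> f /eqP ->.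
rewrite (sumr_const [pred f : {ffun I -> T} | f j == a] (g a)) card_fix1.
by rewrite mulr_natl.
Qed.

Lemma sum_ffun2 (I T : finType) (j m : I) (hjm : j != m) (g : T -> T -> rat) :
  \sum_(f : {ffun I -> T}) g (f j) (f m) =
    (#|T| ^ (#|I| - 2))%:R * \sum_a \sum_b g a b.
Proof.
rewrite (partition_big (fun f : {ffun I -> T} => (f j, f m)) predT) //=.
rewrite pair_big big_distrr /=.
apply: eq_bigr => [[a b]] _ /=.
rewrite (eq_bigr (fun _ => g a b)); last by move=> f /eqP [-> ->].
rewrite (sumr_const [pred f : {ffun I -> T} | (f j, f m) == (a, b)] (g a b)).
rewrite (eq_card (B := [pred f : {ffun I -> T} | (f j == a) && (f m == b)])); last first.
  by move=> f; rewrite !inE xpair_eqE.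
by rewrite card_fix2 // mulr_natl.
Qed.

Lemma or_natr (P Q : bool) : (P || Q)%:R = P%:R + Q%:R - (P && Q)%:R :> rat.
Proof. by case: P; case: Q; rewrite /= ?addr0 ?subr0 ?add0r ?addrK. Qed.

Lemma sum_eq1 (T : finType) (c : T) (h : T -> bool) :
  \sum_(b : T) ((b == c) && h b)%:R = (h c)%:R :> rat.
Proof.
rewrite (bigD1 c) //= eqxx big1 ?addr0 // => b /negbTE -> //.
Qed.

Lemma sum_ind (gT : finGroupType) (x a : gT) :
  \sum_(b : gT) ((x == (a * b)%g) || (x == (b * a)%g))%:R
    = 2 - (a \in ('C[x])%g)%:R :> rat.
Proof.
have e1 : forall b : gT, (x == (a * b)%g) = (b == (a^-1 * x)%g).
  move=> b; apply/eqP/eqP => [->|->]; by rewrite ?mulKg ?mulKVg.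
have e2 : forall b : gT, (x == (b * a)%g) = (b == (x * a^-1)%g).
  move=> b; apply/eqP/eqP => [->|->]; by rewrite ?mulgK ?mulgKV.
rewrite (eq_bigr _ (fun b _ => or_natr _ _)) sumrB big_split /=.
have s1 : \sum_(b : gT) (x == (a * b)%g)%:R = 1 :> rat.
  by rewrite (eq_bigr (fun b => ((b == (a^-1 * x)%g) && true)%:R)) ?sum_eq1 // => b _; rewrite e1 andbT.
have s2 : \sum_(b : gT) (x == (b * a)%g)%:R = 1 :> rat.
  by rewrite (eq_bigr (fun b => ((b == (x * a^-1)%g) && true)%:R)) ?sum_eq1 // => b _; rewrite e2 andbT.
rewrite s1 s2 (eq_bigr (fun b => ((b == (a^-1 * x)%g) && (x == (b * a)%g))%:R)); last first.
  by move=> b _; rewrite e1.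
rewrite sum_eq1.
have -> : (x == (a^-1 * x * a)%g) = (a \in ('C[x])%g).
  rewrite cent1C; apply/eqP/cent1P => [h|h].
    by rewrite /commute {2}h mulgA mulKVg.
  by rewrite /commute in h; rewrite -mulgA h mulKg.
done.
Qed.


Lemma sum_ind' (gT : finGroupType) (x a : gT) :
  \sum_(b : gT) ((x == (b * a)%g) || (x == (a * b)%g))%:R
    = 2 - (a \in ('C[x])%g)%:R :> rat.
Proof. by rewrite -sum_ind; apply: eq_bigr => b _; rewrite orbC. Qed.

Lemma sum_Omega (gT : finGroupType) (k : nat) (F : Omega gT k -> rat) :
  \sum_(w : Omega gT k) F w = \sum_(w1 : {ffun 'I_k -> gT}) \sum_(w2 : {ffun 'I_k -> gT}) F (w1, w2).
Proof. by rewrite pair_big; apply: eq_bigr => -[]. Qed.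

Lemma sum_mem (T : finType) (A : {pred T}) : \sum_(a : T) (a \in A)%:R = #|A|%:R :> rat.
Proof.
rewrite (eq_bigr (fun a => if a \in A then 1 else 0)); last by move=> a _; case: (a \in A).
by rewrite -big_mkcond sumr_const.
Qed.

Lemma final_sum (gT : finGroupType) (x y : gT) :
  \sum_(a : gT) (2 - (a \in ('C[x])%g)%:R) * (2 - (a \in ('C[y])%g)%:R) =
  4 * #|gT|%:R - 2 * #|('C[x])%g|%:R - 2 * #|('C[y])%g|%:R + #|('C[x] :&: 'C[y])%g|%:R :> rat.
Proof.
rewrite (eq_bigr (fun a => 4 - 2 * (a \in ('C[x])%g)%:R - 2 * (a \in ('C[y])%g)%:R
   + (a \in ('C[x] :&: 'C[y])%g)%:R)); last first.
  by move=> a _; rewrite in_setI; case: (a \in _); case: (a \in _) => /=; ring.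
rewrite big_split /= !sumrB -!mulr_sumr !sum_mem sumr_const cardT -cardE.
by rewrite !mulr_natr.
Qed.


Lemma triple (T : finType) (k : nat) (i j m : 'I_k) (hjm : j != m) (P Q : T -> T -> rat) :
  \sum_(w1 : {ffun 'I_k -> T}) \sum_(w2 : {ffun 'I_k -> T}) P (w1 i) (w2 j) * Q (w1 i) (w2 m)
  = (#|T| ^ (k - 2))%:R * (#|T| ^ (k - 1))%:R * \sum_a (\sum_b P a b) * (\sum_c Q a c).
Proof.
under eq_bigr => w1 _ do rewrite (@sum_ffun2 _ _ j m hjm (fun b c => P (w1 i) b * Q (w1 i) c)) card_ord.
rewrite -mulr_sumr -mulrA; congr (_ * _).
rewrite (@sum_ffun1 _ _ i (fun a => \sum_b \sum_c P a b * Q a c)) card_ord; congr (_ * _).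
by apply: eq_bigr => a _; rewrite big_distrlr.
Qed.

Lemma alg (n k : nat) (hn : (0 < n)%N) (hk : (1 < k)%N) (A B C : rat) :
  (n ^ (k - 2))%:R * (n ^ (k - 1))%:R * (4 * n%:R - 2 * A - 2 * B + C) / (n ^ k * n ^ k)%:R
  = 4 / n%:R ^+ 2 * (1 - (A + B) / (2 * n%:R) + C / (4 * n%:R)).
Proof.
move: k hk => [|[|K]] // _.
rewrite !subSS !subn0 natrM !natrX !exprS expr0 mulr1.
have hN : n%:R != 0 :> rat by rewrite pnatr_eq0 -lt0n.
have hP : n%:R ^+ K != 0 :> rat by rewrite expf_neq0.
move: hP; set P := n%:R ^+ K => hP. by field; rewrite hN hP.
Qed.

Lemma two_le k (j m : 'I_k) : j != m -> (1 < k)%N.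
Proof.
case: j m => [[|j] hj] [[|m] hm]; rewrite -val_eqE //= => _.
- exact: leq_trans hm.
- exact: leq_trans hj.
- exact: leq_trans hj.
Qed.

Lemma card_pos (gT : finGroupType) : (0 < #|gT|)%N.
Proof. by apply/card_gt0P; exists 1%g. Qed.
Theorem proposition4p6 (gT : finGroupType) (k : nat) (hk : (0 < k)%N)
    (x y : gT) (v u : Vtx k) (huv : adjG u v) :
  Expect (fun w => Ind v x w * Ind u y w) =
  4 / (#|gT|%:R ^+ 2) *
    (1 - (#|('C[x])%g|%:R + #|('C[y])%g|%:R) / (2 * #|gT|%:R)
       + #|('C[x] :&: 'C[y])%g|%:R / (4 * #|gT|%:R)) :> rat.
Proof.
rewrite /Expect sum_Omega.
move: v u huv => [i j] [l m]; rewrite /adjG /= => /orP [/andP [/eqP -> hmj]|/andP [hli /eqP ->]].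
  rewrite /Ind /=.
  rewrite (@triple _ _ i j m _ (fun a b => ((x == (a * b)%g) || (x == (b * a)%g))%:R)
                  (fun a b => ((y == (a * b)%g) || (y == (b * a)%g))%:R)) 1?eq_sym //.
  under eq_bigr => a _ do rewrite !sum_ind.
  rewrite final_sum card_prod !card_ffun card_ord alg ?card_pos //; last exact: two_le hmj.
rewrite /Ind /= exchange_big /=.
rewrite (@triple _ _ j i l _ (fun a b => ((x == (b * a)%g) || (x == (a * b)%g))%:R)
                  (fun a b => ((y == (b * a)%g) || (y == (a * b)%g))%:R)) 1?eq_sym //.
under eq_bigr => a _ do rewrite !sum_ind'.
rewrite final_sum card_prod !card_ffun card_ord alg ?card_pos //.
exact: two_le hli.
Qed.
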